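(* For every finite zero-set $\mathcal Z$, every integer $k\ge0$ and every $(\alpha,\beta)\in[0,1]^2$, $$I(\alpha,\beta,\mathcal Z)\ge\gamma(\mathcal Z^{\swarrow k})\Big(1-\max(\alpha,\beta)\Big(1+\frac1{k+1}\Big)\Big).$$
   Context: $\mathbb Z_+=\{0,1,2,\dots\}$, $R_{a,b}=([0,a-1]\times[0,b-1])\cap\mathbb Z_+^2$; a zero-set is a union of such rectangles. $\mathrm{row}(x,A),\mathrm{col}(x,A)$ count points of $A$ on the horizontal/vertical line through $x$; $\mathcal T(A)=A\cup\{x\notin A:(\mathrm{row}(x,A),\mathrm{col}(x,A))\notin\mathcal Z\}$; $A$ spans if $\bigcup_t\mathcal T^t(A)=\mathbb Z_+^2$; $\gamma(\mathcal Z)$ is the minimal size of a finite spanning set. $\mathcal Z^{\swarrow k}=\{(u-k,v-k):(u,v)\in\mathcal Z,u\ge k,v\ge k\}$. Large deviation rate: for $\alpha,\beta\ge0$, as $p\to0$ let integers $N,M\to\infty$ with $\log N\sim-\alpha\log p$, $\log M\sim-\beta\log p$; the initial set contains each point of $R_{N,M}$ independently with probability $p$; $I(\alpha,\beta,\mathcal Z)=\lim_{p\to0}\log P_p(\text{initial set spans})/\log p$ (this limit exists). *)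

(* Defs.v *)
From Stdlib Require Import Reals List Arith ClassicalEpsilon.
Import ListNotations.
Open Scope R_scope.

Definition point := (nat * nat)%type.
Definition pset := point -> Prop.

(* A zero-set is a subset of Z_+^2; a FINITE zero-set is a finite union of
   rectangles R_{a,b} = [0,a-1] x [0,b-1], given by the list of its (a,b). *)
Definition rect (a b : nat) : pset := fun x => (fst x < a)%nat /\ (snd x < b)%nat.
Definition zero_set_of (rs : list (nat * nat)) : pset :=
  fun x => exists r, In r rs /\ rect (fst r) (snd r) x.

Definition shiftZ (Z : pset) (k : nat) : pset :=
  fun x => Z (fst x + k, snd x + k)%nat.

Definition has_card (S : pset) (n : nat) : Prop :=
  exists l : list point, NoDup l /\ length l = n /\ forall y, In y l <-> S y.

Definition row_line (x : point) (A : pset) : pset := fun y => A y /\ snd y = snd x.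
Definition col_line (x : point) (A : pset) : pset := fun y => A y /\ fst y = fst x.

(* T(A) = A ∪ {x ∉ A : (row(x,A), col(x,A)) ∉ Z}.  If a line carries infinitely
   many points of A, the pair of counts is not in Z ⊆ Z_+^2. *)
Definition T (Z : pset) (A : pset) : pset :=
  fun x => A x \/
    (~ A x /\ ~ (exists u v, has_card (row_line x A) u /\
                             has_card (col_line x A) v /\ Z (u, v))).

Fixpoint Titer (Z : pset) (t : nat) (A : pset) : pset :=
  match t with
  | O => A
  | S t' => T Z (Titer Z t' A)
  end.

Definition spans (Z : pset) (A : pset) : Prop :=
  forall x, exists t, Titer Z t A x.

Definition in_list (l : list point) : pset := fun x => In x l.

Definition is_gamma (Z : pset) (g : nat) : Prop :=
  (exists l, NoDup l /\ length l = g /\ spans Z (in_list l)) /\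
  (forall l, NoDup l -> spans Z (in_list l) -> (g <= length l)%nat).

Definition grid (N M : nat) : list point := list_prod (seq 0 N) (seq 0 M).

Fixpoint powerset {X} (l : list X) : list (list X) :=
  match l with
  | [] => [[]]
  | x :: l' => let P := powerset l' in map (cons x) P ++ P
  end.

Definition indicator (P : Prop) : R :=
  if excluded_middle_informative P then 1 else 0.

(* P_p(initial set spans), the initial set containing each point of R_{N,M}
   independently with probability p: sum over all subsets S of R_{N,M}. *)
Definition prob_span (Z : pset) (p : R) (N M : nat) : R :=
  fold_right Rplus 0
    (map (fun S => indicator (spans Z (in_list S)) *
                   p ^ length S * (1 - p) ^ (N * M - length S)%nat)
         (powerset (grid N M))).

Definition tends_to_infty (u : nat -> nat) : Prop :=
  forall B : nat, exists n0, forall n, (n0 <= n)%nat -> (B <= u n)%nat.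

(* Main.v *)
Require Import Defs.
From Stdlib Require Import Reals List Arith.
From Stdlib Require Import Lia Lra ClassicalEpsilon Classical Bool FinFun.
Import ListNotations.
Open Scope R_scope.

Definition rsum {A} (f : A -> R) (l : list A) : R := fold_right Rplus 0 (map f l).

Lemma rsum_nil {A} (f : A -> R) : rsum f [] = 0. Proof. reflexivity. Qed.
Lemma rsum_cons {A} (f : A -> R) x l : rsum f (x :: l) = f x + rsum f l.
Proof. reflexivity. Qed.
Lemma rsum_app {A} (f : A -> R) l1 l2 : rsum f (l1 ++ l2) = rsum f l1 + rsum f l2.
Proof. induction l1; unfold rsum in *; simpl; [ring|]. rewrite IHl1; ring. Qed.
Lemma rsum_map {A B} (f : B -> R) (g : A -> B) l : rsum f (map g l) = rsum (fun x => f (g x)) l.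
Proof. unfold rsum; rewrite map_map; reflexivity. Qed.
Lemma rsum_ext_in {A} (f g : A -> R) l : (forall x, In x l -> f x = g x) -> rsum f l = rsum g l.
Proof. induction l; intros H; simpl; auto. unfold rsum in *; simpl. rewrite H by (left; auto).
  rewrite IHl; auto. intros; apply H; right; auto. Qed.
Lemma rsum_le {A} (f g : A -> R) l : (forall x, In x l -> f x <= g x) -> rsum f l <= rsum g l.
Proof. induction l; intros H; unfold rsum in *; simpl; [lra|].
  apply Rplus_le_compat; [apply H; left; auto | apply IHl; intros; apply H; right; auto]. Qed.
Lemma rsum_nonneg {A} (f : A -> R) l : (forall x, In x l -> 0 <= f x) -> 0 <= rsum f l.
Proof. intros H. replace 0 with (rsum (fun _ => 0) l). apply rsum_le; auto.
  induction l; unfold rsum in *; simpl; auto. rewrite IHl; [ring|]. intros; apply H; right; auto. Qed.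
Lemma rsum_scal {A} (c : R) (f : A -> R) l : rsum (fun x => c * f x) l = c * rsum f l.
Proof. induction l; unfold rsum in *; simpl; [ring|]. rewrite IHl; ring. Qed.
Lemma rsum_plus {A} (f g : A -> R) l : rsum (fun x => f x + g x) l = rsum f l + rsum g l.
Proof. induction l; unfold rsum in *; simpl; [ring|]. rewrite IHl; ring. Qed.
Lemma rsum_swap {A B} (f : A -> B -> R) l1 l2 :
  rsum (fun x => rsum (fun y => f x y) l2) l1 = rsum (fun y => rsum (fun x => f x y) l1) l2.
Proof. induction l1; simpl.
  - unfold rsum at 1; simpl. symmetry. replace 0 with (rsum (fun _:B => 0) l2).
    apply rsum_ext_in; reflexivity. induction l2; unfold rsum in *; simpl; auto; rewrite IHl2; ring.
  - rewrite rsum_cons, IHl1. rewrite <- rsum_plus. apply rsum_ext_in. intros; rewrite rsum_cons; ring. Qed.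
Lemma rsum_ge_term {A} (f : A -> R) l x : (forall y, In y l -> 0 <= f y) -> In x l -> f x <= rsum f l.
Proof. induction l; simpl; intros H Hx; [contradiction|]. rewrite rsum_cons.
  destruct Hx as [<-|Hx].
  - assert (0 <= rsum f l) by (apply rsum_nonneg; auto). lra.
  - assert (0 <= f a) by auto. assert (f x <= rsum f l) by auto. lra. Qed.
Lemma rsum_flat_map {A B} (f : B -> R) (g : A -> list B) l :
  rsum f (flat_map g l) = rsum (fun x => rsum f (g x)) l.
Proof. induction l; simpl; auto. rewrite rsum_app, IHl, rsum_cons. reflexivity. Qed.

Lemma ind_true (P : Prop) : P -> indicator P = 1.
Proof. unfold indicator; destruct excluded_middle_informative; tauto. Qed.
Lemma ind_false (P : Prop) : ~ P -> indicator P = 0.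
Proof. unfold indicator; destruct excluded_middle_informative; tauto. Qed.
Lemma ind_iff (P Q : Prop) : (P <-> Q) -> indicator P = indicator Q.
Proof. unfold indicator; destruct excluded_middle_informative, excluded_middle_informative; tauto. Qed.
Lemma ind_01 (P : Prop) : 0 <= indicator P <= 1.
Proof. unfold indicator; destruct excluded_middle_informative; lra. Qed.

Lemma ps_props {A} (l : list A) S : In S (powerset l) ->
  incl S l /\ (length S <= length l)%nat /\ (NoDup l -> NoDup S).
Proof. revert S; induction l; simpl; intros S H.
  - destruct H as [<-|[]]. split; [intros x []|]; split; auto; constructor.
  - apply in_app_or in H. destruct H as [H|H].
    + apply in_map_iff in H. destruct H as [S' [<- HS']]. destruct (IHl S' HS') as [H1 [H2 H3]].
      split; [|split]. intros x [<-|Hx]; [left; auto| right; auto]. simpl; lia.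
      intros Hnd; inversion Hnd; subst. constructor; auto.
    + destruct (IHl S H) as [H1 [H2 H3]]. split; [|split]. intros x Hx; right; auto. lia.
      intros Hnd; inversion Hnd; auto. Qed.

Lemma ps_self {A} (l : list A) : In l (powerset l).
Proof. induction l; simpl; auto. apply in_or_app; left; apply in_map; auto. Qed.

Definition pt_eq_dec : forall x y : point, {x = y} + {x <> y}.
Proof. decide equality; apply Nat.eq_dec. Defined.

Lemma ps_weight (p : R) : forall (l : list point) (t : list point), NoDup l -> NoDup t -> incl t l ->
  rsum (fun X => indicator (incl t X) * (p ^ length X * (1 - p) ^ (length l - length X)%nat))
     (powerset l) = p ^ length t.
Proof.
  induction l as [|x l IH]; intros t Hl Ht Hi.
  - destruct t as [|y t]. simpl. rewrite rsum_cons, rsum_nil, ind_true. simpl; ring. intros z [].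
    exfalso; apply (Hi y); left; auto.
  - simpl powerset. rewrite rsum_app, rsum_map. inversion Hl; subst.
    rewrite (rsum_ext_in _ (fun X => p * (indicator (incl t (x :: X)) *
          (p ^ length X * (1 - p) ^ (length l - length X)%nat)))).
    2:{ intros X HS. simpl length. replace (S (length l) - S (length X))%nat with (length l - length X)%nat by lia.
        simpl; ring. }
    rewrite (rsum_ext_in (fun X => _ * (_ * _ ^ (length (x :: l) - _)%nat)) (fun X => (1-p) * (indicator (incl t X) *
          (p ^ length X * (1 - p) ^ (length l - length X)%nat)))).
    2:{ intros X HS. destruct (ps_props l X HS) as [_ [HlS _]]. simpl length.
        replace (S (length l) - length X)%nat with (S (length l - length X)) by lia. simpl; ring. }
    rewrite !rsum_scal.
    destruct (in_dec pt_eq_dec x t) as [Hxt|Hxt].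
    + destruct (in_split _ _ Hxt) as [t1 [t2 ->]].
      rewrite (rsum_ext_in (fun X => indicator (incl (t1 ++ x :: t2) (x :: X)) * _)
           (fun X => indicator (incl (t1 ++ t2) X) * (p ^ length X * (1 - p) ^ (length l - length X)%nat))).
      2:{ intros X HS. f_equal. apply ind_iff. split; intros H z Hz.
          - assert (Hz' : In z (t1 ++ x :: t2)) by (apply in_app_or in Hz; apply in_or_app; destruct Hz; [left|right;right]; auto).
            destruct (H z Hz') as [<-|]; auto. exfalso. apply (NoDup_remove_2 _ _ _ Ht). auto.
          - apply in_app_or in Hz. destruct Hz as [Hz|[<-|Hz]]; [right; apply H; apply in_or_app; auto|left; auto|right; apply H; apply in_or_app; auto]. }
      rewrite (rsum_ext_in (fun X => indicator (incl (t1 ++ x :: t2) X) * _) (fun _ => 0)).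
      2:{ intros X HS. rewrite ind_false; [ring|]. intros H. destruct (ps_props l X HS) as [Hs _].
          apply H1. apply Hs, H. apply in_or_app; right; left; auto. }
      rewrite IH; auto. 2: eapply NoDup_remove_1; eauto.
      2:{ intros z Hz. assert (In z (x :: l)) by (apply Hi; apply in_app_or in Hz; apply in_or_app; destruct Hz; [left|right;right]; auto).
          destruct H as [<-|]; auto. exfalso. apply (NoDup_remove_2 _ _ _ Ht); auto. }
      replace (rsum (fun _ : list point => 0) (powerset l)) with 0.
      rewrite !length_app; simpl length. replace (length t1 + S (length t2))%nat with (S (length t1 + length t2)) by lia. simpl; ring.
      generalize (powerset l); induction l0; unfold rsum in *; simpl; auto. rewrite <- IHl0; ring.
    + rewrite (rsum_ext_in (fun X => indicator (incl t (x :: X)) * _)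
           (fun X => indicator (incl t X) * (p ^ length X * (1 - p) ^ (length l - length X)%nat))).
      2:{ intros X HS. f_equal. apply ind_iff. split; intros H z Hz.
          - destruct (H z Hz) as [<-|]; auto. contradiction.
          - right; auto. }
      rewrite IH; auto. ring. intros z Hz. destruct (Hi z Hz) as [<-|]; auto. contradiction.
Qed.

Fixpoint tuples (l : list point) (n : nat) : list (list point) :=
  match n with
  | O => [[]]
  | S n' => flat_map (fun t => map (fun x => x :: t) l) (tuples l n')
  end.

Lemma tuples_in l t : incl t l -> In t (tuples l (length t)).
Proof. induction t; simpl; intros H; auto. apply in_flat_map. exists t. split.
  apply IHt. intros z Hz; apply H; right; auto. apply (in_map (fun x => x :: t)). apply H; left; auto. Qed.

Lemma tuples_len l n t : In t (tuples l n) -> length t = n.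
Proof. revert t; induction n; simpl; intros t H. destruct H as [<-|[]]; auto.
  apply in_flat_map in H. destruct H as [t' [H1 H2]]. apply in_map_iff in H2.
  destruct H2 as [x [<- _]]. simpl; f_equal; auto. Qed.

Definition DX (t : list point) : nat := length (nodup Nat.eq_dec (map fst t)).
Definition DY (t : list point) : nat := length (nodup Nat.eq_dec (map snd t)).

Lemma sum_prod (f g : nat -> R) a b :
  rsum (fun x => f (fst x) * g (snd x)) (list_prod a b) = rsum f a * rsum g b.
Proof. induction a; simpl. unfold rsum; simpl; ring.
  rewrite rsum_app, IHa, rsum_map, rsum_cons. simpl. rewrite rsum_scal. ring. Qed.

Lemma rsum_ind_filter (X : list nat) a :
  rsum (fun i => indicator (In i X)) a =
  INR (length (filter (fun i => if in_dec Nat.eq_dec i X then true else false) a)).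
Proof. induction a; simpl. reflexivity. rewrite rsum_cons, IHa.
  destruct (in_dec Nat.eq_dec a X). rewrite ind_true; auto. simpl length; rewrite S_INR; ring.
  rewrite ind_false; auto; ring. Qed.

Lemma cnt_in (X : list nat) a : NoDup a -> rsum (fun i => indicator (In i X)) a <= INR (length (nodup Nat.eq_dec X)).
Proof. intros H. rewrite rsum_ind_filter. apply le_INR. apply NoDup_incl_length.
  apply NoDup_filter; auto. intros z Hz. apply filter_In in Hz. destruct Hz as [_ Hz].
  apply nodup_In. destruct (in_dec Nat.eq_dec z X); auto; discriminate. Qed.

Lemma nodup_len_le {A} dec (l : list A) : (length (nodup dec l) <= length l)%nat.
Proof. induction l; simpl; auto. destruct in_dec; simpl; lia. Qed.

Lemma rsum_const {A} (c : R) (l : list A) : rsum (fun _ => c) l = INR (length l) * c.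
Proof. induction l; [unfold rsum; simpl; ring|]. rewrite rsum_cons, IHl; simpl length; rewrite S_INR; ring. Qed.

Lemma bsum (mu : R) (X : list nat) (N : nat) : 0 < mu <= 1 -> INR N * mu <= 1 ->
  rsum (fun i => if in_dec Nat.eq_dec i X then 1 else mu) (seq 0 N) <= 1 + INR (length X).
Proof. intros Hmu HN.
  apply Rle_trans with (rsum (fun i => mu + indicator (In i X)) (seq 0 N)).
  apply rsum_le. intros i _. destruct in_dec. rewrite ind_true; auto; lra. rewrite ind_false; auto; lra.
  rewrite rsum_plus. assert (rsum (fun _ : nat => mu) (seq 0 N) = INR N * mu).
  { rewrite rsum_const, length_seq; ring. }
  rewrite H. assert (H2 := cnt_in X (seq 0 N) (seq_NoDup _ _)).
  assert (H3 := le_INR _ _ (nodup_len_le Nat.eq_dec X)). lra. Qed.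

Lemma pow_b mu X i n : mu ^ (length (nodup Nat.eq_dec (i :: X)) + n) =
  (if in_dec Nat.eq_dec i X then 1 else mu) * mu ^ (length (nodup Nat.eq_dec X) + n).
Proof. simpl. destruct in_dec; simpl; ring. Qed.

Lemma step_bound (mu : R) N M t : 0 < mu <= 1 -> INR N * mu <= 1 -> INR M * mu <= 1 ->
  rsum (fun x => mu ^ (DX (x :: t) + DY (x :: t))) (grid N M) <=
  (1 + INR (length t)) ^ 2 * mu ^ (DX t + DY t).
Proof. intros Hmu HN HM. unfold grid.
  rewrite (rsum_ext_in _ (fun x => mu ^ (DX t + DY t) *
     ((if in_dec Nat.eq_dec (fst x) (map fst t) then 1 else mu) *
      (if in_dec Nat.eq_dec (snd x) (map snd t) then 1 else mu)))).
  2:{ intros x _. unfold DX, DY. simpl map. rewrite pow_b. rewrite Nat.add_comm, pow_b.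
      rewrite Nat.add_comm. ring. }
  rewrite rsum_scal, (sum_prod (fun i => if in_dec Nat.eq_dec i (map fst t) then 1 else mu) (fun j => if in_dec Nat.eq_dec j (map snd t) then 1 else mu)).
  assert (H1 := bsum mu (map fst t) N Hmu HN). assert (H2 := bsum mu (map snd t) M Hmu HM).
  rewrite length_map in H1, H2.
  assert (0 <= mu ^ (DX t + DY t)) by (apply pow_le; lra).
  assert (0 <= rsum (fun i => if in_dec Nat.eq_dec i (map fst t) then 1 else mu) (seq 0 N)) by
    (apply rsum_nonneg; intros; destruct in_dec; lra).
  assert (0 <= rsum (fun i => if in_dec Nat.eq_dec i (map snd t) then 1 else mu) (seq 0 M)) by
    (apply rsum_nonneg; intros; destruct in_dec; lra).
  simpl. rewrite Rmult_1_r. rewrite (Rmult_comm _ (_ * _)). apply Rmult_le_compat_r; auto.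
  apply Rmult_le_compat; auto. Qed.

Fixpoint Kf (s : nat) : R := match s with O => 1 | S s' => (1 + INR s') ^ 2 * Kf s' end.

Lemma Kf_pos s : 0 < Kf s.
Proof. induction s; simpl; [lra|]. apply Rmult_lt_0_compat; auto. assert (0 <= INR s) by apply pos_INR. nra. Qed.

Lemma T_bound (mu : R) N M s : 0 < mu <= 1 -> INR N * mu <= 1 -> INR M * mu <= 1 ->
  rsum (fun t => mu ^ (DX t + DY t)) (tuples (grid N M) s) <= Kf s.
Proof. intros Hmu HN HM. induction s; simpl. unfold rsum; simpl. unfold DX, DY; simpl; lra.
  rewrite rsum_flat_map. apply Rle_trans with (rsum (fun t => (1 + INR s) ^ 2 * mu ^ (DX t + DY t)) (tuples (grid N M) s)).
  apply rsum_le. intros t Ht. rewrite rsum_map. rewrite <- (tuples_len _ _ _ Ht). apply step_bound; auto.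
  rewrite rsum_scal. apply Rmult_le_compat_l; auto. assert (0 <= INR s) by apply pos_INR. simpl; nra. Qed.

Definition cnt (f : point -> nat) (l : list point) (x : point) : nat :=
  length (filter (fun y => Nat.eqb (f y) (f x)) l).
Definition heavy (k : nat) (l : list point) (x : point) : Prop :=
  (k < cnt snd l x)%nat \/ (k < cnt fst l x)%nat.

Lemma filter_filter' {A} (a b : A -> bool) l : filter a (filter b l) = filter (fun y => b y && a y) l.
Proof. induction l; simpl; auto. destruct (b a0); simpl; destruct (a a0); simpl; rewrite ?IHl; auto. Qed.

Lemma cnt_app f l1 l2 x : cnt f (l1 ++ l2) x = (cnt f l1 x + cnt f l2 x)%nat.
Proof. unfold cnt; rewrite filter_app, length_app; auto. Qed.

Lemma cnt_same f l x y : f x = f y -> cnt f l x = cnt f l y.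
Proof. intros H; unfold cnt; rewrite H; auto. Qed.

Lemma D_split f (P : point -> bool) l : (length (nodup Nat.eq_dec (map f l)) <=
  length (nodup Nat.eq_dec (map f (filter P l))) + length (nodup Nat.eq_dec (map f (filter (fun x => negb (P x)) l))))%nat.
Proof. rewrite <- length_app. apply NoDup_incl_length. apply NoDup_nodup.
  intros z Hz. apply nodup_In in Hz. apply in_map_iff in Hz. destruct Hz as [x [<- Hx]].
  apply in_or_app. destruct (P x) eqn:E; [left|right]; apply nodup_In; apply in_map; apply filter_In; rewrite ?E; auto. Qed.

Lemma D_le f (l : list point) : (length (nodup Nat.eq_dec (map f l)) <= length l)%nat.
Proof. rewrite <- (length_map f l). apply nodup_len_le. Qed.

Lemma heavy_D f k : forall n (l : list point), length l = n -> (forall x, In x l -> k < cnt f l x)%nat ->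
  ((k + 1) * length (nodup Nat.eq_dec (map f l)) <= length l)%nat.
Proof. induction n as [n IH] using lt_wf_ind. intros l Hn H. destruct l as [|x l']. simpl; lia.
  set (l := x :: l') in *.
  set (l1 := filter (fun y => negb (Nat.eqb (f y) (f x))) l).
  assert (Hlen := filter_length (fun y => Nat.eqb (f y) (f x)) l). cbv beta in Hlen. fold l1 in Hlen.
  assert (Hx : (k < cnt f l x)%nat) by (apply H; left; auto). unfold cnt in Hx.
  assert (HD : (length (nodup Nat.eq_dec (map f l)) <= 1 + length (nodup Nat.eq_dec (map f l1)))%nat).
  { change (1 + length (nodup Nat.eq_dec (map f l1)))%nat with (length (f x :: nodup Nat.eq_dec (map f l1))).
    apply NoDup_incl_length. apply NoDup_nodup. intros z Hz. apply nodup_In, in_map_iff in Hz.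
    destruct Hz as [y [<- Hy]]. destruct (Nat.eq_dec (f y) (f x)); [left; auto|right].
    apply nodup_In, in_map, filter_In. split; auto. apply Nat.eqb_neq in n0; rewrite n0; auto. }
  assert (Hl1 : ((k + 1) * length (nodup Nat.eq_dec (map f l1)) <= length l1)%nat).
  { apply (IH (length l1)); auto. rewrite <- Hn. clear -Hlen Hx. unfold l1 in *. lia. intros y Hy. apply filter_In in Hy. destruct Hy as [Hy Hne].
    assert (cnt f l1 y = cnt f l y).
    { unfold cnt, l1. rewrite filter_filter'. f_equal. apply filter_ext. intros z.
      destruct (Nat.eqb (f z) (f y)) eqn:E; [|rewrite andb_false_r; auto]. apply Nat.eqb_eq in E. rewrite E.
      rewrite Hne. auto. }
    rewrite H0. apply H; auto. }
  clear -HD Hl1 Hlen Hx. nia. Qed.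

Lemma cnt_filter_h f k (t : list point) x :
  (k < cnt f t x)%nat ->
  cnt f (filter (fun y => Nat.ltb k (cnt f t y)) t) x = cnt f t x.
Proof. intros Hx. unfold cnt at 1. rewrite filter_filter'. unfold cnt at 2. f_equal. apply filter_ext.
  intros z. destruct (Nat.eqb (f z) (f x)) eqn:E; [|rewrite andb_false_r; auto].
  apply Nat.eqb_eq in E. rewrite (cnt_same f t z x E). apply Nat.ltb_lt in Hx. rewrite Hx; auto. Qed.

Lemma heavy_part f k (t : list point) :
  let h := fun y => Nat.ltb k (cnt f t y) in
  ((k + 1) * length (nodup Nat.eq_dec (map f (filter h t))) <= length (filter h t))%nat.
Proof. intros h. apply (heavy_D f k _ _ eq_refl). intros x Hx. apply filter_In in Hx.
  destruct Hx as [_ Hx]. unfold h in *. apply Nat.ltb_lt in Hx. rewrite cnt_filter_h; auto. Qed.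

Lemma filter_le_imp {A} (a b : A -> bool) l : (forall x, In x l -> a x = true -> b x = true) ->
  (length (filter a l) <= length (filter b l))%nat.
Proof. intros H; induction l; simpl; auto. assert (IH : (length (filter a l) <= length (filter b l))%nat)
  by (apply IHl; intros; apply H; auto; right; auto).
  destruct (a a0) eqn:E. rewrite (H a0 (or_introl eq_refl) E); simpl; lia.
  destruct (b a0); simpl; lia. Qed.

Lemma charge k (t : list point) : (forall x, In x t -> heavy k t x) ->
  ((k + 1) * (DX t + DY t) <= (k + 2) * length t)%nat.
Proof. intros H. unfold DX, DY.
  set (hr := fun y => Nat.ltb k (cnt snd t y)). set (hc := fun y => Nat.ltb k (cnt fst t y)).
  assert (A1 := D_split snd hr t). assert (A2 := D_split fst hc t).
  assert (B1 := heavy_part snd k t). assert (B2 := heavy_part fst k t). fold hr in B1; fold hc in B2.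
  assert (C1 := D_le snd (filter (fun x => negb (hr x)) t)). assert (C2 := D_le fst (filter (fun x => negb (hc x)) t)).
  assert (E1 := filter_length hr t). assert (E2 := filter_length hc t).
  assert (F : (length (filter (fun x => negb (hr x)) t) <= length (filter hc t))%nat).
  { apply filter_le_imp. intros x Hx E. destruct (H x Hx) as [Hr|Hc].
    unfold hr in E; apply Nat.ltb_lt in Hr; rewrite Hr in E; discriminate.
    unfold hc; apply Nat.ltb_lt; auto. }
  cbv zeta in B1, B2.
  assert (Y1 := Nat.mul_le_mono_l _ _ (k+1) A1). assert (X1 := Nat.mul_le_mono_l _ _ (k+1) A2).
  assert (Y2 := Nat.mul_le_mono_l _ _ (k+1) C1). assert (X2 := Nat.mul_le_mono_l _ _ (k+1) C2).
  rewrite Nat.mul_add_distr_l in Y1, X1.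
  assert (Z1 : (k*(length (filter (fun x => negb (hr x)) t) + length (filter (fun x => negb (hc x)) t)) <= k * length t)%nat)
    by (apply Nat.mul_le_mono_l; lia).
  rewrite Nat.mul_add_distr_l. clear H. clearbody hr hc. change Nat.mul with Init.Nat.mul in *. change Nat.add with Init.Nat.add in *. unfold point in *. lia.
Qed.

Lemma sub_len {A} (l : list A) : forall m, (m <= length l)%nat ->
  exists l', incl l' l /\ (NoDup l -> NoDup l') /\ length l' = m.
Proof. induction l as [|x l IH]; intros m Hm.
  - exists []. simpl in Hm. split; [intros z []|split; [intros; constructor|simpl; lia]].
  - destruct m as [|m]. exists []. split; [intros z []|split; [intros; constructor|auto]].
    simpl in Hm. destruct (IH m ltac:(lia)) as [l' [H1 [H2 H3]]]. exists (x :: l'). split; [|split].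
    intros z [<-|Hz]; [left|right]; auto. intros Hnd; inversion Hnd; subst. constructor; auto.
    simpl; auto. Qed.

Lemma NoDup_app' {A} (l1 l2 : list A) : NoDup l1 -> NoDup l2 -> (forall x, In x l1 -> ~ In x l2) -> NoDup (l1 ++ l2).
Proof. induction l1; simpl; intros H1 H2 H3; auto. inversion H1; subst. constructor.
  intros Hin. apply in_app_or in Hin. destruct Hin; [contradiction|]. apply (H3 a); auto.
  apply IHl1; auto. Qed.

Lemma cnt_all f Q w : (forall q, In q Q -> f q = f w) -> cnt f Q w = length Q.
Proof. induction Q; simpl; intros H; unfold cnt; simpl; auto. rewrite (H a (or_introl eq_refl)), Nat.eqb_refl.
  simpl. f_equal. apply IHQ. intros; apply H; right; auto. Qed.

Lemma greedy_step k f (W W' : list point) w :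
  NoDup W -> NoDup W' -> In w W -> ~ In w W' -> (k < cnt f W w)%nat ->
  exists Q, NoDup (Q ++ W') /\ incl Q W /\ (1 <= length Q <= k + 1)%nat /\
    (forall q, In q Q -> f q = f w) /\ (k < cnt f (Q ++ W') w)%nat.
Proof. intros HW HW' Hw Hw' Hk.
  set (inb := fun y => if in_dec pt_eq_dec y W' then true else false).
  set (P := filter (fun y => Nat.eqb (f y) (f w)) W).
  set (Pin := filter inb P). set (Pout := filter (fun y => negb (inb y)) P).
  assert (HlP : (length Pin + length Pout = cnt f W w)%nat) by (apply filter_length).
  assert (HPout : forall y, In y Pout -> In y W /\ f y = f w /\ ~ In y W').
  { intros y Hy. unfold Pout, P in Hy. apply filter_In in Hy. destruct Hy as [Hy Hn]. apply filter_In in Hy.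
    destruct Hy as [Hy He]. apply Nat.eqb_eq in He. split; [|split]; auto. unfold inb in Hn.
    destruct in_dec; simpl in Hn; auto; discriminate. }
  assert (HwP : In w Pout). { unfold Pout, P. apply filter_In. split. apply filter_In. split; auto. apply Nat.eqb_refl.
    unfold inb. destruct in_dec; auto. }
  assert (HndP : NoDup Pout) by (unfold Pout, P; apply NoDup_filter, NoDup_filter; auto).
  destruct (in_split _ _ HwP) as [a [b Hab]]. rewrite Hab in HndP.
  assert (Hnab : NoDup (a ++ b)) by (eapply NoDup_remove_1; eauto).
  assert (Hwab : ~ In w (a ++ b)) by (eapply NoDup_remove_2; eauto).
  assert (Habsub : forall y, In y (a ++ b) -> In y Pout).
  { intros y Hy. rewrite Hab. apply in_app_or in Hy; apply in_or_app; destruct Hy; [left|right;right]; auto. }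
  assert (HlPout : length Pout = S (length (a ++ b))) by (rewrite Hab, !length_app; simpl; lia).
  destruct (sub_len (a ++ b) (Nat.min (k - length Pin) (length (a ++ b))) ltac:(lia)) as [l' [H1 [H2 H3]]].
  assert (HQ : forall q, In q (w :: l') -> In q Pout) by (intros q [<-|Hq]; auto).
  exists (w :: l'). split; [|split; [|split; [|split]]].
  - apply NoDup_app'; [constructor; [intros Hin; exact (Hwab (H1 w Hin))|auto]|auto|].
    intros x Hx. apply HPout, HQ; auto.
  - intros q Hq. apply HPout, HQ; auto.
  - simpl. lia.
  - intros q Hq. apply HPout, HQ; auto.
  - rewrite cnt_app, cnt_all by (intros q Hq; apply HPout, HQ; auto).
    assert (length Pin <= cnt f W' w)%nat.
    { unfold cnt. apply NoDup_incl_length. unfold Pin, P; apply NoDup_filter, NoDup_filter; auto.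
      intros y Hy. unfold Pin, P in Hy. apply filter_In in Hy. destruct Hy as [Hy Hi]. apply filter_In in Hy.
      apply filter_In. split; [|tauto]. unfold inb in Hi; destruct in_dec; auto; discriminate. }
    simpl length. lia.
Qed.

Lemma greedy k (W : list point) : NoDup W -> (forall x, In x W -> heavy k W x) ->
  forall n, (n <= length W)%nat -> exists W', NoDup W' /\ incl W' W /\ (n <= length W' <= n + k)%nat /\
    (forall x, In x W' -> heavy k W' x).
Proof. intros HW Hh n. induction n; intros Hn.
  - exists []. split; [constructor|split; [intros z []|split; [simpl; lia|intros x []]]].
  - destruct (IHn ltac:(lia)) as [W' [H1 [H2 [H3 H4]]]].
    destruct (Nat.le_gt_cases (S n) (length W')) as [Hle|Hgt].
    + exists W'. split; auto; split; auto; split; auto; lia.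
    + assert (Hex : exists w, In w W /\ ~ In w W').
      { apply NNPP. intros Hne. assert (incl W W'). { intros z Hz. apply NNPP. intros Hz'. apply Hne. exists z; auto. }
        assert (Hl := NoDup_incl_length HW H). lia. }
      destruct Hex as [w [Hw Hw']].
      assert (Hmono : forall Q x, In x W' -> heavy k (Q ++ W') x).
      { intros Q x Hx. destruct (H4 x Hx) as [Hr|Hc]; [left|right]; rewrite cnt_app; lia. }
      destruct (Hh w Hw) as [Hr|Hc].
      * destruct (greedy_step k snd W W' w HW H1 Hw Hw' Hr) as [Q [Q1 [Q2 [Q3 [Q4 Q5]]]]].
        exists (Q ++ W'). split; auto. split. intros z Hz; apply in_app_or in Hz; destruct Hz; auto.
        split. rewrite length_app; lia. intros x Hx. apply in_app_or in Hx. destruct Hx as [Hx|Hx]; auto.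
        left. rewrite (cnt_same snd _ x w (Q4 x Hx)). auto.
      * destruct (greedy_step k fst W W' w HW H1 Hw Hw' Hc) as [Q [Q1 [Q2 [Q3 [Q4 Q5]]]]].
        exists (Q ++ W'). split; auto. split. intros z Hz; apply in_app_or in Hz; destruct Hz; auto.
        split. rewrite length_app; lia. intros x Hx. apply in_app_or in Hx. destruct Hx as [Hx|Hx]; auto.
        right. rewrite (cnt_same fst _ x w (Q4 x Hx)). auto.
Qed.

Definition A0 (rs : list (nat * nat)) := fold_right Nat.max 0%nat (map fst rs).
Definition B0 (rs : list (nat * nat)) := fold_right Nat.max 0%nat (map snd rs).

Lemma max_ge (l : list nat) x : In x l -> (x <= fold_right Nat.max 0 l)%nat.
Proof. induction l; simpl; intros H; [contradiction|]. destruct H as [<-|H]; [lia|]. specialize (IHl H); lia. Qed.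

Lemma Z_bound rs u v : zero_set_of rs (u, v) -> (u < A0 rs /\ v < B0 rs)%nat.
Proof. intros [r [Hr [H1 H2]]]. simpl in *. split.
  assert (fst r <= A0 rs)%nat by (apply max_ge, in_map; auto). lia.
  assert (snd r <= B0 rs)%nat by (apply max_ge, in_map; auto). lia. Qed.

Lemma Z_down rs u v u' v' : zero_set_of rs (u, v) -> (u' <= u)%nat -> (v' <= v)%nat -> zero_set_of rs (u', v').
Proof. intros [r [Hr [H1 H2]]] Hu Hv. exists r; split; auto. split; simpl in *; lia. Qed.


Lemma card_lower (S : pset) u (l : list point) : has_card S u -> NoDup l -> (forall y, In y l -> S y) -> (length l <= u)%nat.
Proof. intros [lu [Hnd [Hlen Hiff]]] Hl Hy. rewrite <- Hlen. apply NoDup_incl_length; auto.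
  intros z Hz. apply Hiff; auto. Qed.

Lemma card_sub (S : pset) l : (forall y, S y -> In y l) -> exists n, has_card S n /\ (n <= length l)%nat.
Proof. intros H.
  set (l' := nodup pt_eq_dec (filter (fun y => if excluded_middle_informative (S y) then true else false) l)).
  exists (length l'). split. exists l'. split; [apply NoDup_nodup|split; auto].
  intros y. unfold l'. rewrite nodup_In, filter_In. destruct excluded_middle_informative; split; intros; auto; try tauto.
  destruct H0; discriminate.
  unfold l'. eapply Nat.le_trans. apply nodup_len_le. apply filter_length_le. Qed.

Lemma Titer_mono Z A t d x : Titer Z t A x -> Titer Z (t + d) A x.
Proof. induction d; intros H. rewrite Nat.add_0_r; auto. rewrite Nat.add_succ_r. simpl. left; auto. Qed.

Lemma Titer_mono' Z A t t' x : (t <= t')%nat -> Titer Z t A x -> Titer Z t' A x.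
Proof. intros H Hx. replace t' with (t + (t' - t))%nat by lia. apply Titer_mono; auto. Qed.

Definition heavyb (k : nat) (l : list point) (x : point) : bool :=
  Nat.ltb k (cnt snd l x) || Nat.ltb k (cnt fst l x).

Lemma heavyb_iff k l x : heavyb k l x = true <-> heavy k l x.
Proof. unfold heavyb, heavy. rewrite orb_true_iff, !Nat.ltb_lt. tauto. Qed.

Lemma cnt_filter_heavy f k S x : (k < cnt f S x)%nat -> (f = snd \/ f = fst) ->
  cnt f (filter (heavyb k S) S) x = cnt f S x.
Proof. intros Hx Hf. unfold cnt at 1. rewrite filter_filter'. unfold cnt. f_equal. apply filter_ext.
  intros z. destruct (Nat.eqb (f z) (f x)) eqn:E; [|rewrite andb_false_r; auto].
  apply Nat.eqb_eq in E. rewrite andb_true_r. apply heavyb_iff. unfold heavy.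
  destruct Hf; subst; rewrite (cnt_same _ S z x E); auto. Qed.

Lemma W_heavy k S x : In x (filter (heavyb k S) S) -> heavy k (filter (heavyb k S) S) x.
Proof. intros Hx. apply filter_In in Hx. destruct Hx as [_ Hx]. apply heavyb_iff in Hx. destruct Hx as [H|H].
  left. rewrite cnt_filter_heavy; auto. right. rewrite cnt_filter_heavy; auto. Qed.

Lemma L_light f k S x : (f = snd \/ f = fst) ->
  (cnt f (filter (fun y => negb (heavyb k S y)) S) x <= k)%nat.
Proof. intros Hf. destruct (Nat.lt_ge_cases k (cnt f S x)) as [Hx|Hx].
  - unfold cnt. rewrite filter_filter'. rewrite (filter_ext _ (fun _ => false)). rewrite filter_false; simpl; lia.
    intros z. destruct (Nat.eqb (f z) (f x)) eqn:E; [|rewrite andb_false_r; auto].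
    apply Nat.eqb_eq in E. rewrite andb_true_r. apply negb_false_iff. apply heavyb_iff. unfold heavy.
    destruct Hf; subst; rewrite (cnt_same _ S z x E); auto.
  - eapply Nat.le_trans; [|exact Hx]. unfold cnt. rewrite filter_filter'.
    apply filter_le_imp. intros y _ H. apply andb_true_iff in H; tauto. Qed.


Lemma line_sub (rs : list (nat * nat)) (k : nat) (SS : list point) (B C : pset) (x : point) (f : point -> nat) u :
  (forall y, B y -> C y \/ In y (filter (fun y => negb (heavyb k SS y)) SS)) -> (f = snd \/ f = fst) ->
  has_card (fun y => C y /\ f y = f x) u ->
  exists n, has_card (fun y => B y /\ f y = f x) n /\ (n <= u + k)%nat.
Proof. intros Hsub Hf [lu [Hnd [Hlen Hiff]]].
  destruct (card_sub (fun y => B y /\ f y = f x) (lu ++ filter (fun y => Nat.eqb (f y) (f x)) (filter (fun y => negb (heavyb k SS y)) SS))) as [n [Hn Hle]].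
  { intros y [By Hy]. apply in_or_app. destruct (Hsub y By) as [Cy|Ly]. left; apply Hiff; auto.
    right; apply filter_In; split; auto; apply Nat.eqb_eq; auto. }
  exists n; split; auto. rewrite length_app in Hle. assert (Hl := L_light f k SS x Hf). unfold cnt in Hl.
   lia. Qed.

Lemma compare (rs : list (nat * nat)) (k : nat) (SS : list point) t : forall y, Titer (zero_set_of rs) t (in_list SS) y -> Titer (shiftZ (zero_set_of rs) k) t (in_list (filter (heavyb k SS) SS)) y \/ In y (filter (fun y => negb (heavyb k SS y)) SS).
Proof. induction t; simpl; intros y Hy.
  - unfold in_list in *. destruct (heavyb k SS y) eqn:E; [left|right]; apply filter_In; rewrite ?E; auto.
  - destruct Hy as [Hy|[Hny Hno]].
    + destruct (IHt y Hy) as [H|H]; [left; left|right]; auto.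
    + destruct (in_dec pt_eq_dec y (filter (fun y => negb (heavyb k SS y)) SS)) as [HL|HL]; [right; auto|left].
      destruct (classic (Titer (shiftZ (zero_set_of rs) k) t (in_list (filter (heavyb k SS) SS)) y)) as [HC|HC]; [left; auto|right].
      split; auto. intros [u [v [Hu [Hv HZ]]]]. apply Hno.
      destruct (line_sub rs k SS _ _ y snd u IHt (or_introl eq_refl) Hu) as [n1 [Hn1 Hl1]].
      destruct (line_sub rs k SS _ _ y fst v IHt (or_intror eq_refl) Hv) as [n2 [Hn2 Hl2]].
      exists n1, n2. split; [exact Hn1|split; [exact Hn2|]].
      unfold shiftZ in HZ; simpl in HZ. eapply Z_down; eauto.
Qed.

Lemma W_spans (rs : list (nat * nat)) (k : nat) (SS : list point) : spans (zero_set_of rs) (in_list SS) -> spans (shiftZ (zero_set_of rs) k) (in_list (filter (heavyb k SS) SS)).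
Proof. intros Hsp.
  assert (Hnot : forall y, ~ In y (filter (fun y => negb (heavyb k SS y)) SS) -> exists t, Titer (shiftZ (zero_set_of rs) k) t (in_list (filter (heavyb k SS) SS)) y).
  { intros y Hy. destruct (Hsp y) as [t Ht]. exists t. destruct (compare rs k SS t y Ht); auto; contradiction. }
  intros x. destruct (in_dec pt_eq_dec x (filter (fun y => negb (heavyb k SS y)) SS)) as [HL|HL]; [|auto].
  set (M0 := S (fold_right Nat.max 0%nat (map fst (filter (fun y => negb (heavyb k SS y)) SS)))).
  assert (Hfar : forall m, ~ In (M0 + m, snd x)%nat (filter (fun y => negb (heavyb k SS y)) SS)).
  { intros m Hm. assert (fst (M0 + m, snd x) <= fold_right Nat.max 0 (map fst (filter (fun y => negb (heavyb k SS y)) SS)))%nat by (apply max_ge, in_map; auto).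
    simpl in H. unfold M0 in H. lia. }
  assert (Hall : forall c, exists T, forall m, (m < c)%nat -> Titer (shiftZ (zero_set_of rs) k) T (in_list (filter (heavyb k SS) SS)) (M0 + m, snd x)%nat).
  { induction c. exists 0%nat; intros; lia. destruct IHc as [T HT]. destruct (Hnot _ (Hfar c)) as [t Ht].
    exists (T + t)%nat. intros m Hm. destruct (Nat.eq_dec m c) as [->|Hne].
    apply (Titer_mono' _ _ t); [lia|auto]. apply (Titer_mono' _ _ T); [lia|apply HT; lia]. }
  destruct (Hall (A0 rs)) as [T HT]. exists (S T). simpl.
  destruct (classic (Titer (shiftZ (zero_set_of rs) k) T (in_list (filter (heavyb k SS) SS)) x)) as [HC|HC]; [left; auto|right].
  split; auto. intros [u [v [Hu [Hv HZ]]]]. unfold shiftZ in HZ; simpl in HZ.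
  apply Z_bound in HZ. destruct HZ as [HZ _].
  assert (Hlow : (length (map (fun m => (M0 + m, snd x)%nat) (seq 0 (A0 rs))) <= u)%nat).
  { apply (card_lower _ _ _ Hu). apply FinFun.Injective_map_NoDup. intros a b E; injection E; lia. apply seq_NoDup.
    intros y Hy. apply in_map_iff in Hy. destruct Hy as [m [<- Hm]]. apply in_seq in Hm. split; auto. apply HT; lia. }
  rewrite length_map, length_seq in Hlow. lia.
Qed.

Lemma comb rs k SS g : NoDup SS -> spans (zero_set_of rs) (in_list SS) -> is_gamma (shiftZ (zero_set_of rs) k) g ->
  exists W', NoDup W' /\ incl W' SS /\ (g <= length W' <= g + k)%nat /\ (forall x, In x W' -> heavy k W' x).
Proof. intros HS Hsp [_ Hg]. set (W := filter (heavyb k SS) SS).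
  assert (HW : NoDup W) by (apply NoDup_filter; auto).
  assert (Hgw : (g <= length W)%nat) by (apply Hg; auto; apply W_spans; auto).
  destruct (greedy k W HW (W_heavy k SS) g Hgw) as [W' [H1 [H2 [H3 H4]]]].
  exists W'. split; auto. split; auto. intros z Hz. apply H2 in Hz. apply filter_In in Hz; tauto. Qed.

Lemma in_grid N M i j : In (i, j) (grid N M) <-> (i < N /\ j < M)%nat.
Proof. unfold grid. rewrite in_prod_iff, !in_seq. lia. Qed.

Lemma grid_spans rs N M : (A0 rs <= N)%nat -> (B0 rs <= M)%nat -> spans (zero_set_of rs) (in_list (grid N M)).
Proof. intros HN HM.
  set (G := in_list (grid N M)).
  assert (R1 : forall i j, (j < M)%nat -> Titer (zero_set_of rs) 1 G (i, j)).
  { intros i j Hj. simpl. destruct (Nat.lt_ge_cases i N) as [Hi|Hi].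
    left. apply in_grid; auto. right. split. intros H. apply in_grid in H; lia.
    intros [u [v [Hu [Hv HZ]]]]. apply Z_bound in HZ. destruct HZ as [HZ _].
    assert (Hlow : (length (map (fun a => (a, j)) (seq 0 N)) <= u)%nat).
    { apply (card_lower _ _ _ Hu). apply Injective_map_NoDup. intros a b E; injection E; lia. apply seq_NoDup.
      intros y Hy. apply in_map_iff in Hy. destruct Hy as [m [<- Hm]]. apply in_seq in Hm. split; auto.
      apply in_grid; lia. }
    rewrite length_map, length_seq in Hlow. lia. }
  intros [i j]. destruct (Nat.lt_ge_cases j M) as [Hj|Hj]. exists 1%nat; auto.
  exists 2%nat. change (Titer (zero_set_of rs) 2 G (i, j)) with (T (zero_set_of rs) (Titer (zero_set_of rs) 1 G) (i,j)).
  destruct (classic (Titer (zero_set_of rs) 1 G (i, j))) as [H|H]; [left; auto|right; split; auto].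
  intros [u [v [Hu [Hv HZ]]]]. apply Z_bound in HZ. destruct HZ as [_ HZ].
  assert (Hlow : (length (map (fun b => (i, b)) (seq 0 M)) <= v)%nat).
  { apply (card_lower _ _ _ Hv). apply Injective_map_NoDup. intros a b E; injection E; lia. apply seq_NoDup.
    intros y Hy. apply in_map_iff in Hy. destruct Hy as [m [<- Hm]]. apply in_seq in Hm. split; auto.
    apply R1; lia. }
  rewrite length_map, length_seq in Hlow. lia.
Qed.

Definition good (k : nat) (t : list point) : Prop := NoDup t /\ forall x, In x t -> heavy k t x.

Lemma length_grid N M : length (grid N M) = (N * M)%nat.
Proof. unfold grid, point. rewrite length_prod, !length_seq; auto. Qed.

Lemma NoDup_lprod (a b : list nat) : NoDup a -> NoDup b -> NoDup (list_prod a b).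
Proof. induction a; simpl; intros Ha Hb. constructor. inversion Ha; subst.
  apply NoDup_app'. apply Injective_map_NoDup; auto. intros u v E; injection E; auto. apply IHa; auto.
  intros [x y] Hx Hin. apply in_map_iff in Hx. destruct Hx as [z [E _]]. injection E; intros; subst.
  apply in_prod_iff in Hin. tauto. Qed.

Lemma NoDup_grid N M : NoDup (grid N M).
Proof. unfold grid. apply NoDup_lprod; apply seq_NoDup. Qed.

Lemma prob_bound1 rs k g p N M : 0 < p < 1 -> is_gamma (shiftZ (zero_set_of rs) k) g ->
  prob_span (zero_set_of rs) p N M <=
  rsum (fun s => rsum (fun t => indicator (good k t) * p ^ length t) (tuples (grid N M) s)) (seq g (k + 1)).
Proof. intros Hp Hg. unfold prob_span. fold (rsum (fun S => indicator (spans (zero_set_of rs) (in_list S)) * p ^ length S *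
      (1 - p) ^ (N * M - length S)) (powerset (grid N M))).
  set (w := fun S : list point => p ^ length S * (1 - p) ^ (N * M - length S)).
  assert (Hw : forall S, 0 <= w S) by (intros; unfold w; apply Rmult_le_pos; apply pow_le; lra).
  apply Rle_trans with (rsum (fun S => rsum (fun s => rsum (fun t => indicator (good k t) * (indicator (incl t S) * w S))
      (tuples (grid N M) s)) (seq g (k + 1))) (powerset (grid N M))).
  - apply rsum_le. intros S HS. rewrite Rmult_assoc. fold (w S).
    destruct (ps_props _ _ HS) as [HSi [_ HSn]]. specialize (HSn (NoDup_grid N M)).
    assert (Hnn : forall t, 0 <= indicator (good k t) * (indicator (incl t S) * w S)).
    { intros; apply Rmult_le_pos; [apply ind_01|apply Rmult_le_pos; [apply ind_01|auto]]. }
    destruct (classic (spans (zero_set_of rs) (in_list S))) as [Hsp|Hsp].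
    + rewrite ind_true; auto. destruct (comb rs k S g HSn Hsp Hg) as [W' [H1 [H2 [H3 H4]]]].
      apply Rle_trans with (rsum (fun t => indicator (good k t) * (indicator (incl t S) * w S)) (tuples (grid N M) (length W'))).
      apply Rle_trans with (indicator (good k W') * (indicator (incl W' S) * w S)).
      rewrite !ind_true; [lra|auto|split; auto].
      apply (rsum_ge_term (fun t => indicator (good k t) * (indicator (incl t S) * w S))); auto. apply tuples_in. intros z Hz; apply HSi, H2; auto.
      apply (rsum_ge_term (fun s => rsum (fun t => _) (tuples (grid N M) s))).
      intros; apply rsum_nonneg; auto. apply in_seq; lia.
    + rewrite ind_false; auto. rewrite Rmult_0_l. apply rsum_nonneg; intros; apply rsum_nonneg; auto.
  - rewrite rsum_swap. apply rsum_le. intros s Hs. rewrite rsum_swap. apply Req_le. apply rsum_ext_in.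
    intros t Ht. rewrite rsum_scal. destruct (classic (good k t)) as [Hgd|Hgd].
    + f_equal. unfold w. rewrite <- (length_grid N M). apply ps_weight. apply NoDup_grid. apply Hgd.
      clear -Ht. apply tuples_len in Ht as Hl. revert Ht. generalize s. clear Hl.
      induction t; intros s' Ht z Hz; [contradiction|]. destruct s'; simpl in Ht. destruct Ht as [Ht|[]]; discriminate.
      apply in_flat_map in Ht. destruct Ht as [t' [Ht' Hx]]. apply in_map_iff in Hx. destruct Hx as [y [E Hy]].
      injection E; intros; subst. destruct Hz as [<-|Hz]; auto. eapply IHt; eauto.
    + rewrite !ind_false; auto; ring.
Qed.

Lemma lnL_nonneg L : 1 <= L -> 0 <= ln L.
Proof. intros H. destruct (Req_dec L 1) as [->|Hne]. rewrite ln_1; lra.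
  rewrite <- ln_1. left. apply ln_increasing; lra. Qed.

Lemma good_weight k t L : 1 <= L -> good k t ->
  1 <= exp ((1 + 1 / INR (k + 1)) * INR (length t) * ln L) * (/ L) ^ (DX t + DY t).
Proof. intros HL [_ Hh]. assert (Hc := charge k t Hh).
  assert (Hk : 0 < INR (k + 1)) by (apply lt_0_INR; lia).
  assert (HD : INR (DX t + DY t) <= (1 + 1 / INR (k + 1)) * INR (length t)).
  { apply le_INR in Hc. rewrite !mult_INR in Hc. replace (INR (k + 2)) with (INR (k + 1) + 1) in Hc
      by (rewrite !plus_INR; simpl; ring).
    apply Rmult_le_reg_l with (INR (k + 1)); auto. field_simplify; [|lra]. lra. }
  rewrite pow_inv. assert (HL0 : 0 < L) by lra.
  rewrite <- (exp_ln (L ^ (DX t + DY t))) by (apply pow_lt; auto). rewrite ln_pow by auto.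
  rewrite <- exp_Ropp, <- exp_plus. assert (H0 := lnL_nonneg L HL).
  eapply Rle_trans; [|apply exp_ineq1_le]. 
  assert (0 <= ((1 + 1 / INR (k + 1)) * INR (length t) - INR (DX t + DY t)) * ln L)
    by (apply Rmult_le_pos; lra). lra. Qed.

Lemma inner_bound k s N M p L : 0 < p < 1 -> 1 <= L -> INR N <= L -> INR M <= L ->
  rsum (fun t => indicator (good k t) * p ^ length t) (tuples (grid N M) s) <=
  p ^ s * exp ((1 + 1 / INR (k + 1)) * INR s * ln L) * Kf s.
Proof. intros Hp HL HN HM.
  set (E := exp ((1 + 1 / INR (k + 1)) * INR s * ln L)).
  apply Rle_trans with (rsum (fun t => p ^ s * E * (/ L) ^ (DX t + DY t)) (tuples (grid N M) s)).
  - apply rsum_le. intros t Ht. rewrite (tuples_len _ _ _ Ht). assert (0 < p ^ s) by (apply pow_lt; lra).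
    destruct (classic (good k t)) as [Hg|Hg].
    + rewrite ind_true; auto. assert (H1 := good_weight k t L HL Hg). rewrite (tuples_len _ _ _ Ht) in H1.
      fold E in H1. nra.
    + rewrite ind_false; auto. assert (0 < E) by apply exp_pos. assert (0 <= (/ L) ^ (DX t + DY t))
        by (apply pow_le; left; apply Rinv_0_lt_compat; lra). rewrite Rmult_0_l. apply Rmult_le_pos; [apply Rmult_le_pos; lra|auto].
  - rewrite rsum_scal. assert (0 < p ^ s * E) by (apply Rmult_lt_0_compat; [apply pow_lt; lra|apply exp_pos]).
    rewrite Rmult_assoc. rewrite (Rmult_assoc (p ^ s)). apply Rmult_le_compat_l. apply pow_le; lra.
    apply Rmult_le_compat_l. left; apply exp_pos. apply T_bound.
    split. apply Rinv_0_lt_compat; lra. rewrite <- Rinv_1. apply Rinv_le_contravar; lra.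
    apply Rmult_le_reg_r with L; [lra|]. rewrite Rmult_assoc, Rinv_l by lra. lra.
    apply Rmult_le_reg_r with L; [lra|]. rewrite Rmult_assoc, Rinv_l by lra. lra.
Qed.

Definition wS (p : R) (N M : nat) (S : list point) := p ^ length S * (1 - p) ^ (N * M - length S).

Lemma prob_eq Z p N M : prob_span Z p N M = rsum (fun S => indicator (spans Z (in_list S)) * wS p N M S) (powerset (grid N M)).
Proof. unfold prob_span, rsum, wS. f_equal. apply map_ext. intros; ring. Qed.

Lemma prob_le1 Z p N M : 0 < p < 1 -> prob_span Z p N M <= 1.
Proof. intros Hp. rewrite prob_eq.
  assert (H := ps_weight p (grid N M) [] (NoDup_grid N M) (NoDup_nil _) (fun z (H : In z []) => match H with end)).
  simpl in H. rewrite <- H. apply rsum_le. intros S HS. rewrite (ind_true (incl [] S)) by (intros z []). rewrite length_grid.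
  unfold wS. assert (0 <= p ^ length S * (1 - p) ^ (N * M - length S)) by (apply Rmult_le_pos; apply pow_le; lra).
  assert (H1 := ind_01 (spans Z (in_list S))). nra. Qed.

Lemma prob_pos rs p N M : 0 < p < 1 -> (A0 rs <= N)%nat -> (B0 rs <= M)%nat -> 0 < prob_span (zero_set_of rs) p N M.
Proof. intros Hp HN HM. rewrite prob_eq.
  apply Rlt_le_trans with (indicator (spans (zero_set_of rs) (in_list (grid N M))) * wS p N M (grid N M)).
  rewrite ind_true by (apply grid_spans; auto). unfold wS. rewrite Rmult_1_l. apply Rmult_lt_0_compat; apply pow_lt; lra.
  apply (rsum_ge_term (fun S => indicator (spans (zero_set_of rs) (in_list S)) * wS p N M S)).
  intros S _. apply Rmult_le_pos. apply ind_01. unfold wS; apply Rmult_le_pos; apply pow_le; lra.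
  apply ps_self. Qed.

Lemma prob_final rs k g p N M L : 0 < p < 1 -> is_gamma (shiftZ (zero_set_of rs) k) g ->
  1 <= L -> INR N <= L -> INR M <= L -> ln p + (1 + 1 / INR (k + 1)) * ln L <= 0 ->
  prob_span (zero_set_of rs) p N M <= rsum Kf (seq g (k + 1)) * exp (INR g * (ln p + (1 + 1 / INR (k + 1)) * ln L)).
Proof. intros Hp Hg HL HN HM Hc. eapply Rle_trans. apply (prob_bound1 rs k g p N M Hp Hg).
  set (c := ln p + (1 + 1 / INR (k + 1)) * ln L) in *.
  eapply Rle_trans. apply rsum_le. intros s _. apply (inner_bound k s N M p L Hp HL HN HM).
  rewrite Rmult_comm, <- rsum_scal. apply rsum_le. intros s Hs. apply in_seq in Hs.
  assert (E : p ^ s * exp ((1 + 1 / INR (k + 1)) * INR s * ln L) = exp (INR s * c)).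
  { rewrite <- (exp_ln (p ^ s)) by (apply pow_lt; lra). rewrite ln_pow by lra. rewrite <- exp_plus. f_equal. unfold c; ring. }
  rewrite E. apply Rmult_le_compat_r. left; apply Kf_pos.
  destruct (Req_dec (INR s * c) (INR g * c)) as [->|Hne]. lra. left. apply exp_increasing.
  assert (INR g <= INR s) by (apply le_INR; lia). nra. Qed.

Lemma dist_lt x y e : R_dist x y < e -> y - e < x < y + e.
Proof. unfold R_dist, Rabs. destruct Rcase_abs; lra. Qed.

Lemma cv_ge u v l l' : Un_cv u l -> Un_cv v l' -> (exists N0, forall n, (N0 <= n)%nat -> v n <= u n) -> l' <= l.
Proof. intros Hu Hv [N0 H]. apply Rnot_lt_le. intros Hlt.
  set (e := (l' - l) / 2). assert (He : 0 < e) by (unfold e; lra).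
  destruct (Hu e He) as [N1 H1]. destruct (Hv e He) as [N2 H2].
  set (n := Nat.max N0 (Nat.max N1 N2)).
  assert (A := dist_lt _ _ _ (H1 n ltac:(unfold n; lia))). assert (B := dist_lt _ _ _ (H2 n ltac:(unfold n; lia))).
  assert (C := H n ltac:(unfold n; lia)). unfold e in *. lra. Qed.

Lemma cv_const c : Un_cv (fun _ => c) c.
Proof. intros e He. exists 0%nat. intros n _. unfold R_dist. rewrite Rminus_diag, Rabs_R0; auto. Qed.

Lemma cv_max x y a b : Un_cv x a -> Un_cv y b -> Un_cv (fun n => Rmax (x n) (y n)) (Rmax a b).
Proof. intros Hx Hy e He. destruct (Hx e He) as [N1 H1]. destruct (Hy e He) as [N2 H2].
  exists (Nat.max N1 N2). intros n Hn. assert (A := dist_lt _ _ _ (H1 n ltac:(lia))).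
  assert (B := dist_lt _ _ _ (H2 n ltac:(lia))). unfold R_dist, Rabs, Rmax.
  destruct (Rle_dec (x n) (y n)), (Rle_dec a b), Rcase_abs; lra. Qed.

Lemma ln_neg p : 0 < p < 1 -> ln p < 0.
Proof. intros H. rewrite <- ln_1. apply ln_increasing; lra. Qed.

Lemma cv_invln p : (forall n, 0 < p n < 1) -> Un_cv p 0 -> Un_cv (fun n => / ln (p n)) 0.
Proof. intros Hp Hc e He. destruct (Hc (exp (- / e)) (exp_pos _)) as [N0 H0]. exists N0. intros n Hn.
  assert (A := dist_lt _ _ _ (H0 n Hn)). specialize (Hp n).
  assert (B : ln (p n) < - / e). { rewrite <- (ln_exp (- / e)). apply ln_increasing; lra. }
  assert (Hl := ln_neg _ Hp). unfold R_dist. rewrite Rminus_0_r.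
  rewrite Rabs_left by (apply Rinv_lt_0_compat; auto).
  assert (0 < / e) by (apply Rinv_0_lt_compat; auto).
  rewrite <- Rinv_opp. rewrite <- (Rinv_inv e).
  apply Rinv_lt_contravar. nra. lra. Qed.

Lemma ln_le x y : 0 < x -> x <= y -> ln x <= ln y.
Proof. intros H1 H2. destruct (Req_dec x y) as [->|]; [lra|]. left; apply ln_increasing; lra. Qed.

Lemma ln_le0 x : x <= 1 -> ln x <= 0.
Proof. intros H. destruct (Rlt_dec 0 x). rewrite <- ln_1; apply ln_le; lra.
  unfold ln. destruct (Rlt_dec 0 x); [contradiction|lra]. Qed.

Theorem mainTheorem14 :
  forall (rs : list (nat * nat)) (k : nat) (alpha beta : R),
    0 <= alpha <= 1 -> 0 <= beta <= 1 ->
    forall g : nat, is_gamma (shiftZ (zero_set_of rs) k) g ->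
    forall (p : nat -> R) (N M : nat -> nat) (I : R),
      (forall n, 0 < p n < 1) ->
      Un_cv p 0 ->
      tends_to_infty N -> tends_to_infty M ->
      Un_cv (fun n => ln (INR (N n)) / (- ln (p n))) alpha ->
      Un_cv (fun n => ln (INR (M n)) / (- ln (p n))) beta ->
      Un_cv (fun n => ln (prob_span (zero_set_of rs) (p n) (N n) (M n)) / ln (p n)) I ->
      I >= INR g * (1 - Rmax alpha beta * (1 + 1 / INR (k + 1))).
Proof.
  intros rs k alpha beta Ha Hb g Hg p N M I Hp Hp0 HN HM Hal Hbe HI.
  set (a := 1 + 1 / INR (k + 1)). set (m := Rmax alpha beta).
  assert (Hk : 0 < INR (k + 1)) by (apply lt_0_INR; lia).
  assert (Ha1 : 1 <= a). { unfold a. assert (0 < 1 / INR (k+1)) by (apply Rdiv_lt_0_compat; lra). lra. }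
  set (P := fun n => prob_span (zero_set_of rs) (p n) (N n) (M n)).
  assert (Hu0 : forall n, 0 <= ln (P n) / ln (p n)).
  { intros n. assert (H1 := ln_le0 _ (prob_le1 (zero_set_of rs) (p n) (N n) (M n) (Hp n))).
    assert (H2 := ln_neg _ (Hp n)). unfold Rdiv. assert (/ ln (p n) < 0) by (apply Rinv_lt_0_compat; auto). fold (P n) in H1. nra. }
  apply Rle_ge. destruct (Rle_dec (INR g * (1 - m * a)) 0) as [Hneg|Hpos].
  - apply Rle_trans with 0; auto. apply (cv_ge _ _ _ _ HI (cv_const 0)). exists 0%nat. intros n _. apply Hu0.
  - apply Rnot_le_lt in Hpos. assert (Hg0 : 0 <= INR g) by apply pos_INR.
    assert (Hma : 1 - m * a > 0) by (destruct (Rle_dec (1 - m * a) 0); [nra|lra]).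
    set (e := fun n => Rmax (ln (INR (N n)) / - ln (p n)) (ln (INR (M n)) / - ln (p n))).
    assert (He : Un_cv e m) by (apply cv_max; auto).
    set (C := rsum Kf (seq g (k + 1))).
    assert (HC : 0 < C).
    { unfold C. destruct (seq g (k+1)) as [|s0 l0] eqn:E. rewrite <- length_zero_iff_nil, length_seq in E; lia.
      rewrite rsum_cons. assert (0 < Kf s0) by apply Kf_pos. assert (0 <= rsum Kf l0) by (apply rsum_nonneg; intros; left; apply Kf_pos). lra. }
    set (v := fun n => ln C * / ln (p n) + INR g * (1 - a * e n)).
    assert (Hv : Un_cv v (ln C * 0 + INR g * (1 - a * m))).
    { apply CV_plus. apply CV_mult. apply cv_const. apply cv_invln; auto.
      apply CV_mult. apply cv_const.
      apply (CV_minus (fun _ => 1) (fun n => a * e n)). apply cv_const. apply CV_mult; auto. apply cv_const. }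
    replace (INR g * (1 - m * a)) with (ln C * 0 + INR g * (1 - a * m)) by ring.
    apply (cv_ge _ _ _ _ HI Hv).
    set (eps := (1 - m * a) / (2 * a)). assert (Heps : 0 < eps) by (unfold eps; apply Rdiv_lt_0_compat; lra).
    destruct (He eps Heps) as [N1 H1].
    destruct (HN (Nat.max (A0 rs) 1)) as [N2 H2]. destruct (HM (Nat.max (B0 rs) 1)) as [N3 H3].
    exists (Nat.max N1 (Nat.max N2 N3)). intros n Hn.
    specialize (H1 n ltac:(lia)). specialize (H2 n ltac:(lia)). specialize (H3 n ltac:(lia)).
    apply dist_lt in H1.
    assert (Hae : 1 - a * e n > 0).
    { assert (a * e n < a * (m + eps)) by (apply Rmult_lt_compat_l; lra).
      assert (a * eps = (1 - m * a) / 2) by (unfold eps; field; lra). nra. }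
    specialize (Hp n). assert (Hlp := ln_neg _ Hp).
    set (L := INR (Nat.max (N n) (M n))).
    assert (HLN : INR (N n) <= L) by (apply le_INR; lia). assert (HLM : INR (M n) <= L) by (apply le_INR; lia).
    assert (HL1 : 1 <= L) by (assert (1 <= INR (N n)) by (apply (le_INR 1); lia); lra).
    assert (HlnL : ln L = e n * (- ln (p n))).
    { unfold e, L. assert (1 <= INR (N n)) by (apply (le_INR 1); lia). assert (1 <= INR (M n)) by (apply (le_INR 1); lia).
      destruct (Nat.le_ge_cases (N n) (M n)) as [Hle|Hle].
      - rewrite Nat.max_r by auto. rewrite Rmax_right. field; lra.
        unfold Rdiv. apply Rmult_le_compat_r. left; apply Rinv_0_lt_compat; lra. apply ln_le. lra. apply le_INR; auto.
      - rewrite Nat.max_l by auto. rewrite Rmax_left. field; lra.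
        unfold Rdiv. apply Rmult_le_compat_r. left; apply Rinv_0_lt_compat; lra. apply ln_le. lra. apply le_INR; auto. }
    assert (Hc : ln (p n) + a * ln L = ln (p n) * (1 - a * e n)) by (rewrite HlnL; ring).
    assert (Hc0 : ln (p n) + a * ln L <= 0) by (rewrite Hc; nra).
    assert (HPb := prob_final rs k g (p n) (N n) (M n) L Hp Hg HL1 HLN HLM Hc0). fold a C in HPb.
    assert (HP0 : 0 < prob_span (zero_set_of rs) (p n) (N n) (M n)) by (apply prob_pos; auto; lia).
    assert (Hln : ln (prob_span (zero_set_of rs) (p n) (N n) (M n)) <= ln C + INR g * (ln (p n) + a * ln L)).
    { rewrite <- (ln_exp (INR g * _)), <- ln_mult by (auto; apply exp_pos). apply ln_le; auto. }
    unfold v. rewrite Hc in Hln.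
    assert (Hinv : / ln (p n) < 0) by (apply Rinv_lt_0_compat; auto).
    unfold Rdiv. replace (ln C * / ln (p n) + INR g * (1 - a * e n)) with
      ((ln C + INR g * (ln (p n) * (1 - a * e n))) * / ln (p n)) by (field; lra).
    fold (P n) in Hln |- *. assert (Hd : 0 <= (ln C + INR g * (ln (p n) * (1 - a * e n)) - ln (P n)) * - / ln (p n)) by (apply Rmult_le_pos; lra). nra.
Qed.
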